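(* Let $\mathcal{T}_n$ denote the set of trees on $n$ vertices. If $T$ is a maximal tree with respect to $e^{M_2}$ in $\mathcal{T}_n$ (i.e., $e^{M_2}(T)\geq e^{M_2}(T'')$ for all $T''\in\mathcal{T}_n$), then the distance between any pendant vertex and any vertex with the maximum degree in $T$ is at most 2.
   Context: For a tree $G$ with edge set $E(G)$ and vertex degrees $d_G(v)$, the exponential of the second Zagreb index is $e^{M_2}(G)=\sum_{uv\in E(G)} e^{d_G(u)d_G(v)}$. A pendant vertex is a vertex of degree 1. *)

(* Defs.v *)
From HB Require Import structures.
From mathcomp Require Import all_boot all_order all_algebra.
From Stdlib Require Import Reals.
From mathcomp Require Import Rstruct.
Set Implicit Arguments. Unset Strict Implicit. Unset Printing Implicit Defensive.
Import GRing.Theory Num.Theory.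

Definition simple_graph n (e : rel 'I_n) : Prop :=
  symmetric e /\ irreflexive e.

(* The edge set: unordered pairs {u,v}, represented as (u,v) with u < v. *)
Definition edges n (e : rel 'I_n) : {set 'I_n * 'I_n} :=
  [set p : 'I_n * 'I_n | (p.1 < p.2)%N && e p.1 p.2].

Definition is_tree n (e : rel 'I_n) : Prop :=
  simple_graph e /\ (forall x y, connect e x y) /\ #|edges e| = n.-1.

Definition deg n (e : rel 'I_n) (v : 'I_n) : nat := #|[set u | e v u]|.

Local Open Scope ring_scope.
Definition eM2 n (e : rel 'I_n) : R :=
  (\sum_(p in edges e) (exp (INR (deg e p.1 * deg e p.2)) : R))%R.

Local Close Scope ring_scope.
Definition dist_le n (e : rel 'I_n) (u v : 'I_n) (k : nat) : Prop :=
  exists s : seq 'I_n, (size s <= k)%N /\ path e u s /\ last u s = v.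

(* Main.v *)
Require Import Defs.
From mathcomp Require Import all_boot all_order all_algebra.
From Stdlib Require Import Reals.
From mathcomp Require Import Rstruct zify.
Set Implicit Arguments. Unset Strict Implicit. Unset Printing Implicit Defensive.
Section G.
Variable n : nat.
Implicit Types e : rel 'I_n.

Definition epair (a b : 'I_n) : 'I_n * 'I_n := if (a < b)%N then (a, b) else (b, a).

Lemma epair_eq a b c d : epair a b = epair c d -> (a = c /\ b = d) \/ (a = d /\ b = c).
Proof.
rewrite /epair; case: ifP; case: ifP => _ _ [-> ->]; tauto.
Qed.

Lemma epair_edge e a b : simple_graph e -> e a b -> epair a b \in edges e.
Proof.
move=> [sy ir] eab; rewrite /epair inE; case: ifP => /= lab; first by rewrite lab.
have nab : a != b by apply: contraTneq eab => ->; rewrite ir.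
rewrite sy eab andbT; move: lab nab; rewrite -val_eqE /=; lia.
Qed.

Lemma count_lemma e x y w z : simple_graph e -> #|edges e| = n.-1 ->
  e x y -> e w z -> w != x -> w != y -> z != x -> z != y ->
  (deg e x + deg e y <= n.-1)%N.
Proof.
move=> G ecard exy ewz wx wy zx zy.
have [sy ir] := G.
have xy : x != y by apply: contraTneq exy => ->; rewrite ir.
set Sx := [set epair x t | t in [set t | e x t]].
set Sy := [set epair y t | t in [set t | e y t]].
have injx : forall c, injective (epair c).
  by move=> c t t' /epair_eq [[_ ->]|[-> ->]].
have cx : #|Sx| = deg e x by rewrite card_imset.
have cy : #|Sy| = deg e y by rewrite card_imset.
have cI : (#|Sx :&: Sy| <= 1)%N.
  rewrite -(cards1 (epair x y)); apply: subset_leq_card; apply/subsetP => p.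
  rewrite in_setI => /andP [/imsetP [t _ ->] /imsetP [s _]] /epair_eq [[xe _]|[-> ->]].
    by move: xy; rewrite xe eqxx.
  by rewrite inE.
have nin : epair w z \notin Sx :|: Sy.
  rewrite inE; apply/norP; split; apply/imsetP => [[t ht /epair_eq]]; rewrite inE in ht.
    case=> [[wx' _]|[wt zx']]; first by move: wx; rewrite wx' eqxx.
    by move: zx; rewrite zx' eqxx.
  case=> [[wx' _]|[wt zx']]; first by move: wy; rewrite wx' eqxx.
  by move: zy; rewrite zx' eqxx.
have sub : epair w z |: (Sx :|: Sy) \subset edges e.
  apply/subsetP => p; rewrite in_setU1 in_setU => /orP [/eqP ->|/orP [/imsetP [t ht ->]|/imsetP [t ht ->]]].
  - exact: epair_edge G ewz.
  - by apply: (epair_edge G); rewrite inE in ht.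
  - by apply: (epair_edge G); rewrite inE in ht.
have := subset_leq_card sub; rewrite cardsU1 nin ecard.
have := cardsUI Sx Sy; rewrite cx cy. lia.
Qed.

Lemma connect_nb e x y : x != y -> connect e x y -> exists z, e x z.
Proof.
move=> xy /connectP [[|z p] /= pa ly]; first by move: xy; rewrite ly eqxx.
by move/andP: pa => [exz _]; exists z.
Qed.

Lemma d0 e u : dist_le e u u 2. Proof. by exists [::]. Qed.
Lemma d1 e u v : e u v -> dist_le e u v 2.
Proof. by move=> h; exists [:: v]; rewrite /= h. Qed.
Lemma d2 e u z v : e u z -> e z v -> dist_le e u v 2.
Proof. by move=> h1 h2; exists [:: z; v]; rewrite /= h1 h2. Qed.

Lemma core e u v x y : simple_graph e -> deg e u = 1%N ->
  (forall w, (deg e w <= deg e v)%N) ->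
  e x y ->
  (forall w z, e w z -> [|| w == x, w == y, z == x | z == y]) ->
  (forall w, w != x -> w != y -> e w x || e w y) ->
  (v = x \/ [/\ v != x, v != y & e v x]) -> dist_le e u v 2.
Proof.
move=> [sy ir] du dmax exy H1 H2 [->|[vx vy evx]].
  case: (eqVneq u x) => [->|ux]; first exact: d0.
  case: (eqVneq u y) => [->|uy]; first by apply: d1; rewrite sy.
  by case/orP: (H2 u ux uy) => h; [apply: d1 | apply: (d2 h); rewrite sy].
case: (eqVneq u v) => [->|uv]; first exact: d0.
case: (eqVneq u x) => [->|ux]; first by apply: d1; rewrite sy.
case: (eqVneq u y) => [->|uy]; first by apply: (d2 (z:=x)); rewrite sy.
case/orP: (H2 u ux uy) => h; first by apply: (d2 h); rewrite sy.
case evy: (e v y); first by apply: (d2 h); rewrite sy.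
exfalso.
have dv : (deg e v <= 1)%N.
  rewrite /deg -(cards1 x); apply: subset_leq_card; apply/subsetP => t.
  rewrite !inE => evt; have := H1 _ _ evt; rewrite (negbTE vx) (negbTE vy) /=.
  case/orP => /eqP tt; first by rewrite tt.
  by move: evy; rewrite -tt evt.
have dx : (2 <= deg e x)%N.
  have yv : y != v by rewrite eq_sym.
  have c2 : #|[set y; v]| = 2 by rewrite cards2 yv.
  rewrite /deg -c2; apply: subset_leq_card; apply/subsetP => t.
  by rewrite !inE => /orP [] /eqP ->; [|rewrite sy].
have := dmax x; lia.
Qed.

Lemma key e u v : is_tree e -> deg e u = 1%N ->
  (forall w, (deg e w <= deg e v)%N) -> ~ dist_le e u v 2 ->
  forall x y, e x y -> (deg e x + deg e y <= n.-1)%N.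
Proof.
move=> [G [conn ecard]] du dmax nd x y exy.
have [sy ir] := G.
case: leqP => // big; exfalso; apply: nd.
have H1 : forall w z, e w z -> [|| w == x, w == y, z == x | z == y].
  move=> w z ewz; apply/negPn/negP; rewrite !negb_or => /and4P [a b c d].
  have := count_lemma G ecard exy ewz a b c d; lia.
have H2 : forall w, w != x -> w != y -> e w x || e w y.
  move=> w wx wy; have [z ewz] := connect_nb wx (conn w x).
  have := H1 _ _ ewz; rewrite (negbTE wx) (negbTE wy) /= => /orP [] /eqP <-;
    by rewrite ewz ?orbT.
have H1' : forall w z, e w z -> [|| w == y, w == x, z == y | z == x].
  by move=> w z /H1; case: (w == x); case: (w == y); case: (z == x); case (z == y).
have H2' : forall w, w != y -> w != x -> e w y || e w x.
  by move=> w a b; rewrite orbC; apply: H2.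
have eyx : e y x by rewrite sy.
case: (eqVneq v x) => [vx|vx]; first exact: (core G du dmax exy H1 H2 (or_introl vx)).
case: (eqVneq v y) => [vy|vy]; first exact: (core G du dmax eyx H1' H2' (or_introl vy)).
case/orP: (H2 v vx vy) => h.
  exact: (core G du dmax exy H1 H2 (or_intror (And3 vx vy h))).
exact: (core G du dmax eyx H1' H2' (or_intror (And3 vy vx h))).
Qed.
End G.
Section DS.
Variable m : nat.
Local Notation N := m.+2.
Definition KK := N %/ 2.
Definition par (j : nat) : nat := if (j < KK.+1)%N then 0%N else 1%N.
Definition ds : rel 'I_N := fun i j =>
  ((0 < j)%N && (i == par j :> nat)) || ((0 < i)%N && (j == par i :> nat)).
Definition pO (j : 'I_N) : 'I_N := inord (par j).
Definition o1 : 'I_N := inord 1.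

Lemma K1 : (1 <= KK)%N /\ (KK.+1 <= N)%N /\ (4 * (KK * (N - KK)) >= N * N - 1)%N.
Proof. rewrite /KK; have := divn_eq N 2; have := ltn_pmod N (isT : 0 < 2)%N; nia. Qed.

Lemma par_le j : (par j <= 1)%N. Proof. by rewrite /par; case: ifP. Qed.
Lemma val_pO j : (pO j : nat) = par j.
Proof. rewrite /pO inordK //; have := par_le j; lia. Qed.
Lemma val_o1 : (o1 : nat) = 1%N. Proof. by rewrite /o1 inordK. Qed.

Lemma ds_tree : is_tree ds.
Proof.
have [k1 [k2 _]] := K1.
have sy : symmetric ds by move=> i j; rewrite /ds orbC.
split; [split=> // | split].
- move=> i; rewrite /ds orbb; apply/negP => /andP [a /eqP b]; move: b a.
  rewrite /par; case: ifP => h; lia.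
- have c0 : forall x, connect ds x ord0.
    move=> x; case: (eqVneq x ord0) => [->|x0]; first exact: connect0.
    have xp : (0 < x)%N by move: x0; rewrite -val_eqE /=; lia.
    case h: (x < KK.+1)%N.
      by apply: connect1; rewrite /ds /= xp /par h.
    have h1 : (1 < KK.+1)%N by lia.
    apply: (connect_trans (y := o1)); apply: connect1; rewrite /ds val_o1 /= ?xp /par ?h ?h1 //.
    by rewrite orbT.
  move=> x y; apply: connect_trans (c0 x) _; rewrite (sym_connect_sym sy); exact: c0.
- have -> : edges ds = [set (pO j, j) | j in [set~ ord0]].
    apply/setP => [[a b]]; rewrite inE /=; apply/idP/imsetP.
      move=> /andP [ab]; rewrite /ds => /orP [/andP [b0 /eqP ap]|/andP [a0 /eqP bp]].
        exists b; first by rewrite !inE -val_eqE /=; lia.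
        by congr pair; apply: val_inj => /=; rewrite val_pO.
      by have := par_le a; lia.
    case=> j; rewrite !inE -val_eqE /= => j0 [-> ->].
    rewrite val_pO /ds val_pO eqxx /= andbT.
    rewrite /par; case: ifP => h; lia.
  rewrite card_imset; last by move=> a b [].
  by rewrite cardsC1 card_ord.
Qed.

Lemma card_lb a b (A : {set 'I_N}) : (b <= N)%N ->
  (forall j : 'I_N, (a <= j < b)%N -> j \in A) -> (b - a <= #|A|)%N.
Proof.
move=> bN H.
pose f := fun i : 'I_(b - a) => (inord (a + i) : 'I_N).
have fv : forall i : 'I_(b - a), (f i : nat) = (a + i)%N.
  by move=> i; rewrite /f inordK //; have := ltn_ord i; lia.
have inj : injective f.
  by move=> i i' /(congr1 val) /=; rewrite !fv => h; apply: val_inj => /=; lia.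
rewrite -[X in (X <= _)%N]card_ord -cardsT -(card_imset _ inj).
apply: subset_leq_card; apply/subsetP => j /imsetP [i _ ->].
apply: H; rewrite fv; have := ltn_ord i; lia.
Qed.

Lemma deg0 : (KK <= deg ds ord0)%N.
Proof.
have [k1 [k2 _]] := K1.
have := card_lb (a := 1) (b := KK.+1) (A := [set u | ds ord0 u]) k2.
rewrite subSS subn0; apply => j hj; rewrite inE /ds /= /par.
have -> : (j < KK.+1)%N by lia.
by have -> : (0 < j)%N by lia.
Qed.

Lemma deg1 : (N - KK <= deg ds o1)%N.
Proof.
have [k1 [k2 _]] := K1.
set S := [set j : 'I_N | (KK < j)%N].
have h1 := card_lb (a := KK.+1) (b := N) (A := S) (leqnn _).
have h2 : (N - KK.+1 <= #|S|)%N by apply: h1 => j hj; rewrite inE; lia.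
have nin : ord0 \notin S by rewrite inE /=; lia.
have sub : ord0 |: S \subset [set u | ds o1 u].
  apply/subsetP => j; rewrite !inE => /orP [/eqP ->|hj].
    rewrite /ds val_o1 /= /par.
    by have -> : (1 < KK.+1)%N by lia.
  rewrite /ds val_o1 /= /par.
  have -> : (j < KK.+1)%N = false by lia.
  by have -> : (0 < j)%N by lia.
have := subset_leq_card sub; rewrite cardsU1 nin /deg; lia.
Qed.

Lemma edge01 : (ord0, o1) \in edges ds.
Proof.
have [k1 _] := K1.
rewrite inE /= val_o1 /ds val_o1 /= /par.
by have -> : (1 < KK.+1)%N by lia.
Qed.
End DS.
From Stdlib Require Import Lra Classical.
Import Order.TTheory GRing.Theory Num.Theory.

Lemma eM2_lb n (e : rel 'I_n) p0 : p0 \in edges e ->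
  Rle (exp (INR (deg e p0.1 * deg e p0.2)%N)) (eM2 e).
Proof.
move=> h; apply/RleP; rewrite /eM2 (bigD1 p0) //= lerDl.
apply: sumr_ge0 => p _; apply/RleP; left; exact: exp_pos.
Qed.

Local Open Scope ring_scope.
Lemma eM2_ub n (e : rel 'I_n) (c : R) :
  (forall p, p \in edges e -> Rle (INR (deg e p.1 * deg e p.2)%N) c) ->
  Rle (eM2 e) (Rmult (INR #|edges e|) (exp c)).
Proof.
move=> H; apply/RleP; rewrite /eM2.
apply: (@le_trans _ _ (\sum_(p in edges e) exp c)).
  apply: ler_sum => p hp; apply/RleP.
  have [lt|eq] := Rle_lt_or_eq_dec _ _ (H p hp).
    by left; apply: exp_increasing.
  by rewrite eq; right.
by rewrite sumr_const -mulr_natl INRE.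
Qed.

Local Close Scope ring_scope.
Local Open Scope R_scope.
Lemma two_t t : (0 <= t) -> (2 * t < exp t).
Proof.
move=> t0; have [tp|tz] := Rle_lt_or_eq_dec _ _ t0; last first.
  by rewrite -tz exp_0; lra.
have h : (1 + t/2 < exp (t/2)) by apply: exp_ineq1; lra.
have e2 : exp t = (exp (t/2) * exp (t/2)) by rewrite -exp_plus; congr exp; lra.
have hp : 0 < 1 + t/2 by lra.
rewrite e2.
have hh : (1 + t/2) * (1 + t/2) < exp (t/2) * exp (t/2) by apply: Rmult_le_0_lt_compat; lra.
have sq : 0 <= (1 - t/2) * (1 - t/2) by apply: Rle_0_sqr.
nra.
Qed.

Lemma real_fin (D P : R) : (0 <= D) -> (D * D + 2 * D <= 4 * P) ->
  (D * exp (D * D / 4) < exp P).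
Proof.
move=> D0 hP.
have h1 : (D < exp (D / 2)) by have := two_t (t := (D/2)); lra.
have h2 : (exp (D * D / 4 + D / 2) <= exp P).
  have [lt|eq] := Rle_lt_or_eq_dec (D * D / 4 + D / 2) P ltac:(lra).
    by left; apply: exp_increasing.
  by rewrite eq; right.
rewrite exp_plus in h2.
have := exp_pos (D * D / 4); nra.
Qed.
Local Close Scope R_scope.

Lemma two_le n (e : rel 'I_n) u : simple_graph e -> deg e u = 1%N -> (1 < n)%N.
Proof.
move=> [sy ir] du.
have : (0 < #|[set t | e u t]|)%N by rewrite -/(deg e u) du.
case/card_gt0P => t; rewrite inE => eut.
have ut : u != t by apply: contraTneq eut => ->; rewrite ir.
have := max_card (mem [set u; t]); rewrite cards2 ut card_ord; lia.
Qed.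

Theorem lemma1 (n : nat) (e : rel 'I_n) :
  is_tree e ->
  (forall e' : rel 'I_n, is_tree e' -> (eM2 e' <= eM2 e)%R) ->
  forall u v : 'I_n,
    deg e u = 1%N ->
    (forall w : 'I_n, (deg e w <= deg e v)%N) ->
    dist_le e u v 2.
Proof.
case: n e => [|[|m]] e T Hmax u v du dmax.
- by have := ltn_ord u.
- by have := two_le T.1 du.
apply: NNPP => nd.
have Hk := key T du dmax nd.
have h1 := Hmax _ (ds_tree m).
have h2 := eM2_lb (edge01 m).
have hp : forall p, p \in edges e ->
    Rle (INR (deg e p.1 * deg e p.2)%N) (Rdiv (Rmult (INR m.+1) (INR m.+1)) 4).
  move=> p; rewrite inE => /andP [_ ep].
  have := Hk _ _ ep => /= hs.
  have hs' : (deg e p.1 + deg e p.2 <= m.+1)%N by [].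
  have hs2 := leq_mul hs' hs'.
  have h4 : (4 * (deg e p.1 * deg e p.2) <= m.+1 * m.+1)%N.
    apply: leq_trans hs2; set a := deg e p.1; set b := deg e p.2.
    have : (0 <= (a - b) * (a - b))%N by []. nia.
  have := le_INR _ _ (ssrnat.leP h4); rewrite !mult_INR.
  rewrite (_ : INR 4 = 4%R); last by simpl; lra.
  set a := INR (deg e p.1); set b := INR (deg e p.2); set c := INR m.+1.
  move=> h; rewrite -/c.
  set ab := (a * b)%R; set cc := (c * c)%R; move: h; rewrite -/ab -/cc => h.
  apply: (Rmult_le_reg_l 4); [lra|]. rewrite /Rdiv. 
  rewrite (_ : (4 * (cc * / 4) = cc)%R); [lra| field].
have h3 := eM2_ub hp; rewrite T.2.2 in h3.
have [k1 [k2 k3]] := K1 m.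
have hd := deg0 m; have hd1 := deg1 m.
have P4 : (m.+1 * m.+1 + 2 * m.+1 <= 4 * (deg (@ds m) ord0 * deg (@ds m) (o1 m)))%N.
  have : (KK m * (m.+2 - KK m) <= deg (@ds m) ord0 * deg (@ds m) (o1 m))%N by apply: leq_mul.
  nia.
set d0 := deg (@ds m) ord0; set d1 := deg (@ds m) (o1 m).
have h5 : (INR m.+1 * INR m.+1 + 2 * INR m.+1 <= 4 * (INR d0 * INR d1))%R.
  have := le_INR _ _ (ssrnat.leP P4); rewrite !plus_INR !mult_INR -/d0 -/d1 !S_INR /=.
  nra.
have h6 := real_fin (D := INR m.+1) (P := (INR d0 * INR d1)%R) (pos_INR _) h5.
have h2' : Rle (exp (INR (d0 * d1))) (eM2 (@ds m)) := h2.
rewrite mult_INR in h2'.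
have h3' : Rle (eM2 e) (Rmult (INR m.+1) (exp (Rdiv (Rmult (INR m.+1) (INR m.+1)) 4))) := h3.
lra.
Qed.
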